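(* Let $\alpha_x,\alpha_y,\alpha_z>1$ and consider the Chamon model with these dimensions. For $i=0,1,2,3$ let $C_i=\{s_i+2\lambda_x e_x^{+}+2\lambda_y e_y^{+}+2\lambda_z e_z^{+}:(\lambda_x,\lambda_y,\lambda_z)\in\mathbb Z_{\alpha_x}\times\mathbb Z_{\alpha_y}\times\mathbb Z_{\alpha_z}\}\subseteq\mathcal A\setminus\mathcal D$, where $s_0=(0,1,0)$, $s_1=(1,0,0)$, $s_2=(0,0,1)$, $s_3=(1,1,1)$. Then for every Pauli operator $E$ on the data qubits and every $i\in\{0,1,2,3\}$, the number of $s\in C_i$ such that $E$ anticommutes with $S_s$ is even.
   Context: Chamon model: let $\mathcal A=\mathbb Z_{2\alpha_x}\times\mathbb Z_{2\alpha_y}\times\mathbb Z_{2\alpha_z}$ and $\mathcal D=\{(x,y,z)\in\mathcal A: x+y+z \text{ even}\}$, one qubit per point of $\mathcal D$. With $e_x^{\pm}=(\pm1,0,0)$, $e_y^{\pm}=(0,\pm1,0)$, $e_z^{\pm}=(0,0,\pm1)$, for $s\in\mathcal A\setminus\mathcal D$ the stabilizer generator is $S_s=X_{s+e_x^+}X_{s+e_x^-}Y_{s+e_y^+}Y_{s+e_y^-}Z_{s+e_z^+}Z_{s+e_z^-}$ (single-qubit Paulis, $Y=ZX$). A stabilizer's measurement outcome is changed by an error $E$ exactly when $E$ anticommutes with it. *)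

(* Defs.v *)
From mathcomp Require Import all_boot all_algebra.
Set Implicit Arguments. Unset Strict Implicit. Unset Printing Implicit Defensive.
Import GRing.Theory.
Local Open Scope ring_scope.

(* Points of A.  'Z_(2*a) is Z/(2a) since a > 1 in all uses. *)
Definition point (ax ay az : nat) : Type :=
  ('Z_(2 * ax) * 'Z_(2 * ay) * 'Z_(2 * az))%type.

(* x + y + z even (parity of representatives is well defined as moduli are even) *)
Definition in_D ax ay az (p : point ax ay az) : bool :=
  ~~ odd (val p.1.1 + val p.1.2 + val p.2)%N.

Definition qubit (ax ay az : nat) : Type := {p : point ax ay az | in_D p}.

(* Single-qubit Paulis up to phase (Y = ZX). *)
Inductive pauli1 := PI | PX | PY | PZ.

Definition anticomm1 (p q : pauli1) : bool :=
  match p, q with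
  | PI, _ | _, PI => false
  | PX, PX | PY, PY | PZ, PZ => false
  | _, _ => true
  end.

Definition pauli_op (ax ay az : nat) : Type := qubit ax ay az -> pauli1.

Definition anticommute ax ay az (P Q : pauli_op ax ay az) : bool :=
  odd #|[pred q : qubit ax ay az | anticomm1 (P q) (Q q)]|.

Definition addp ax ay az (p q : point ax ay az) : point ax ay az :=
  (p.1.1 + q.1.1, p.1.2 + q.1.2, p.2 + q.2).

Definition pt ax ay az (x : 'Z_(2 * ax)) (y : 'Z_(2 * ay)) (z : 'Z_(2 * az))
  : point ax ay az := (x, y, z).

Definition stab ax ay az (s : point ax ay az) : pauli_op ax ay az :=
  fun q =>
    let p := val q in
    if (p == addp s (pt 1 0 0)) || (p == addp s (pt (-1) 0 0)) then PX
    else if (p == addp s (pt 0 1 0)) || (p == addp s (pt 0 (-1) 0)) then PY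
    else if (p == addp s (pt 0 0 1)) || (p == addp s (pt 0 0 (-1))) then PZ
    else PI.

Definition s_base ax ay az (i : 'I_4) : point ax ay az :=
  match nat_of_ord i with
  | O => pt 0 1 0
  | S O => pt 1 0 0
  | S (S O) => pt 0 0 1
  | _ => pt 1 1 1
  end.

Definition Cset (ax ay az : nat) (i : 'I_4) : {set point ax ay az} :=
  [set addp (s_base ax ay az i)
        (pt (2 * l.1.1)%N%:R (2 * l.1.2)%N%:R (2 * l.2)%N%:R)
   | l : 'I_ax * 'I_ay * 'I_az].

(* Main.v *)
Require Import Defs.
From mathcomp Require Import all_boot all_algebra.
From mathcomp Require Import ring zify.
Import GRing.Theory.
Set Implicit Arguments. Unset Strict Implicit. Unset Printing Implicit Defensive.

Section Aux.
Local Open Scope ring_scope.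

Lemma one_neq_m1 (a : nat) : (1 < a)%N -> (1 : 'Z_(2*a)) != -1.
Proof.
move=> ha; rewrite -subr_eq0 opprK; apply/eqP => h.
have := congr1 val h; rewrite /= Zp_cast ?modn_small //; lia.
Qed.

Lemma one_neq_m1' (a : nat) : (1 < a)%N -> (-1 : 'Z_(2*a)) != 1.
Proof. by move=> ha; rewrite eq_sym one_neq_m1. Qed.

Lemma half (a : nat) (w : 'Z_(2*a)) : (0 < a)%N ->
  exists m : 'I_a, ((2 * m)%N%:R : 'Z_(2*a)) = w + w.
Proof.
move=> ha; have hm : (val w %% a < a)%N by rewrite ltn_mod.
exists (Ordinal hm); apply: val_inj; rewrite /= Zp_nat /= muln_modr.
have hc : (Zp_trunc (2 * a)).+2 = (2 * a)%N by rewrite Zp_cast //; lia.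
move: (nat_of_ord w) => n; rewrite hc modn_mod mul2n addnn //.
Qed.

Lemma ringt (a : nat) (p s : 'Z_(2*a)) (n : nat) :
  p + p - (s + (2*n)%N%:R) = s + ((p - s - n%:R) + (p - s - n%:R)).
Proof. rewrite natrM; ring. Qed.

Lemma eqc (Z : comRingType) (x y a : Z) : (x == (x + x - y) + a) = (x == y + - a).
Proof.
rewrite -subr_eq0 -[RHS]subr_eq0.
have -> : x - (x + x - y + a) = - (x - (y + - a)) by ring.
by rewrite oppr_eq0.
Qed.

Definition refl ax ay az (p s : point ax ay az) : point ax ay az :=
  (p.1.1 + p.1.1 - s.1.1, p.1.2 + p.1.2 - s.1.2, p.2 + p.2 - s.2).
Definition negp ax ay az (d : point ax ay az) : point ax ay az :=
  (- d.1.1, - d.1.2, - d.2).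

Lemma eqp ax ay az (p s d : point ax ay az) :
  (p == addp (refl p s) d) = (p == addp s (negp d)).
Proof.
case: p => [[p1 p2] p3]; case: s => [[s1 s2] s3]; case: d => [[d1 d2] d3].
by rewrite /addp /refl /negp /= !xpair_eqE !eqc.
Qed.

Lemma stab_refl ax ay az (q : qubit ax ay az) (s : point ax ay az) :
  stab (refl (val q) s) q = stab s q.
Proof.
rewrite /stab /= !eqp /negp /pt /= !oppr0 !opprK.
rewrite (orbC (val q == addp s (1, 0, 0))).
rewrite (orbC (val q == addp s (0, 1, 0))).
by rewrite (orbC (val q == addp s (0, 0, 1))).
Qed.

Lemma nofix ax ay az (p s d : point ax ay az) :
  refl p s = s -> p == addp s d -> d = negp d.
Proof.
move=> h e; have e2 := e; rewrite -{1}h eqp in e2.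
have := etrans (esym (eqP e)) (eqP e2).
case: s {h e e2} => [[s1 s2] s3]; case: d => [[d1 d2] d3].
rewrite /addp /negp => h.
have h1 : s1 + d1 = s1 + - d1 := congr1 (fun t => t.1.1) h.
have h2 : s2 + d2 = s2 + - d2 := congr1 (fun t => t.1.2) h.
have h3 : s3 + d3 = s3 + - d3 := congr1 (fun t => t.2) h.
by rewrite -(addrI _ h1) -(addrI _ h2) -(addrI _ h3).
Qed.

Lemma refl_inv ax ay az (p s : point ax ay az) : refl p (refl p s) = s.
Proof.
case: s => [[s1 s2] s3]; rewrite /refl /=; congr (_, _, _); ring.
Qed.

End Aux.

Lemma inv_even (T : finType) (r : T -> T) (A : {set T}) :
  {in A, forall x, r x \in A} -> {in A, forall x, r (r x) = x} ->
  {in A, forall x, r x != x} -> ~~ odd #|A|.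
Proof.
have [n le] : exists n, (#|A| <= n)%N by exists #|A|.
elim: n A le => [|n IH] A le h1 h2 h3.
  by move: le; rewrite leqn0 => /eqP ->.
case: (set_0Vmem A) => [->|[x xA]]; first by rewrite cards0.
set B := A :\: [set x; r x].
have sub : [set x; r x] \subset A.
  by apply/subsetP => y; rewrite !inE => /orP[] /eqP ->; rewrite ?h1.
have hB : #|A| = (#|B| + 2)%N.
  rewrite /B cardsD (setIidPr sub) cards2 eq_sym (h3 x xA).
  have := subset_leq_card sub; rewrite cards2 eq_sym (h3 x xA) /=; lia.
rewrite hB oddD /= addbF; apply: (IH B).
- lia.
- move=> y; rewrite /B !inE !negb_or => /andP [/andP [hx hrx] yA].
  rewrite h1 // andbT; apply/andP; split; apply/eqP => e.
    by move/eqP: hrx; apply; rewrite -e h2.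
  by move/eqP: hx; apply; rewrite -(h2 y yA) e h2.
- by move=> y; rewrite /B !inE => /andP [_ yA]; apply: h2.
- by move=> y; rewrite /B !inE => /andP [_ yA]; apply: h3.
Qed.

Local Open Scope ring_scope.
Theorem lemma2 (ax ay az : nat) (hx : (1 < ax)%N) (hy : (1 < ay)%N) (hz : (1 < az)%N)
  (E : pauli_op ax ay az) (i : 'I_4) :
  ~~ odd #|[set s in Cset ax ay az i | anticommute E (stab s)]|.
Proof.
set C := Cset ax ay az i.
set P := fun (s : point ax ay az) (q : qubit ax ay az) => anticomm1 (E q) (stab s q).
have key : forall q : qubit ax ay az, ~~ odd #|[set s in C | P s q]|.
  move=> q; apply: (inv_even (r := refl (val q))).
  - move=> s; rewrite !inE /P stab_refl => /andP [sC ->]; rewrite andbT.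
    case/imsetP: sC => l _ ->.
    set si := s_base ax ay az i.
    have [m1 e1] := half ((val q).1.1 - si.1.1 - (l.1.1)%:R) (ltnW hx).
    have [m2 e2] := half ((val q).1.2 - si.1.2 - (l.1.2)%:R) (ltnW hy).
    have [m3 e3] := half ((val q).2 - si.2 - (l.2)%:R) (ltnW hz).
    apply/imsetP; exists (m1, m2, m3) => //=.
    by rewrite /refl /addp /pt /= e1 e2 e3 !ringt.
  - by move=> s _; rewrite refl_inv.
  - move=> s; rewrite inE /P => /andP [_ hP]; apply/negP => /eqP hfix.
    move: hP; rewrite /stab /=.
    case: ifP => [/orP[] e _ | _].
      + move/(nofix hfix): e => /(congr1 (fun t => t.1.1)) /= /eqP.
        by rewrite ?opprK ?(negbTE (one_neq_m1 hx)) ?(negbTE (one_neq_m1' hx)).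
      + move/(nofix hfix): e => /(congr1 (fun t => t.1.1)) /= /eqP.
        by rewrite ?opprK ?(negbTE (one_neq_m1 hx)) ?(negbTE (one_neq_m1' hx)).
    case: ifP => [/orP[] e _ | _].
      + move/(nofix hfix): e => /(congr1 (fun t => t.1.2)) /= /eqP.
        by rewrite ?opprK ?(negbTE (one_neq_m1 hy)) ?(negbTE (one_neq_m1' hy)).
      + move/(nofix hfix): e => /(congr1 (fun t => t.1.2)) /= /eqP.
        by rewrite ?opprK ?(negbTE (one_neq_m1 hy)) ?(negbTE (one_neq_m1' hy)).
    case: ifP => [/orP[] e _ | _].
      + move/(nofix hfix): e => /(congr1 (fun t => t.2)) /= /eqP.
        by rewrite ?opprK ?(negbTE (one_neq_m1 hz)) ?(negbTE (one_neq_m1' hz)).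
      + move/(nofix hfix): e => /(congr1 (fun t => t.2)) /= /eqP.
        by rewrite ?opprK ?(negbTE (one_neq_m1 hz)) ?(negbTE (one_neq_m1' hz)).
    by case: (E q).
set n := fun s => #|[pred q | P s q]|.
have eB : odd #|[set s in C | anticommute E (stab s)]| = odd (\sum_(s in C) n s).
  have -> : odd (\sum_(s in C) n s) = odd (\sum_(s in C) (odd (n s) : nat)).
    apply: (big_ind2 (fun a b => odd a = odd b)) => //.
      by move=> a b c d h1 h2; rewrite !oddD h1 h2.
    by move=> s _; case: (odd (n s)).
  congr odd; rewrite -sum1_card big_mkcond [RHS]big_mkcond /=.
  apply: eq_bigr => s _; rewrite inE; case: (s \in C) => //.
have eC : (\sum_(s in C) n s = \sum_q #|[set s in C | P s q]|)%N.
  transitivity (\sum_(s in C) \sum_q (P s q : nat))%N.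
    apply: eq_bigr => s _; rewrite /n -sum1_card big_mkcond /=.
    by apply: eq_bigr => q _; rewrite inE.
  rewrite exchange_big; apply: eq_bigr => q _.
  rewrite -sum1_card big_mkcond [RHS]big_mkcond /=.
  by apply: eq_bigr => s _; rewrite inE; case: (s \in C).
rewrite eB eC -dvdn2; apply: dvdn_sum => q _; rewrite dvdn2; exact: key.
Qed.
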